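(* Let $A\in\mathrm{GL}_{n}(\mathbb{Z})$. If the group $G=\mathbb{Z}^{n}\rtimes_{A}\mathbb{Z}$ admits a length function which is both discrete and purely positive, then $G$ is virtually abelian.
   Context: $\mathbb{Z}^{n}\rtimes_{A}\mathbb{Z}$ is the semidirect product in which a generator of $\mathbb{Z}$ acts on $\mathbb{Z}^n$ by $A$. A length function on a group $G$ is a function $l:G\to[0,\infty)$ such that $l(g^{n})=|n|\,l(g)$ for all $g\in G,n\in\mathbb{Z}$; $l(hgh^{-1})=l(g)$ for all $g,h$; and $l(ab)\leq l(a)+l(b)$ whenever $a,b$ commute. It is purely positive if $l(g)>0$ for every element of infinite order, and discrete if there is $c>0$ with $l(g)>c$ whenever $l(g)\neq 0$. *)

(* Defs.v *)
From HB Require Import structures.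
From mathcomp Require Import all_boot all_order all_algebra.
From mathcomp Require Import reals.
Set Implicit Arguments. Unset Strict Implicit. Unset Printing Implicit Defensive.
Import Order.TTheory GRing.Theory Num.Theory.
Local Open Scope ring_scope.

(* The group Z^n ⋊_A Z, elements (v, k) with v : Z^n (column vectors), k : Z,
   product (v,k)(w,m) = (v + A^k w, k + m). *)
Definition SD (n : nat) := ('cV[int]_n * int)%type.

Definition mxpowz (n : nat) (A : 'M[int]_n) (k : int) : 'M[int]_n :=
  match k with
  | Posz m => iter m (mulmx A) 1%:M
  | Negz m => iter m.+1 (mulmx (invmx A)) 1%:M
  end.

Definition sd_one n : SD n := (0, 0).
Definition sd_mul n (A : 'M[int]_n) (x y : SD n) : SD n :=
  (x.1 + mxpowz A x.2 *m y.1, x.2 + y.2).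
Definition sd_inv n (A : 'M[int]_n) (x : SD n) : SD n :=
  (- (mxpowz A (- x.2) *m x.1), - x.2).

Definition sd_pow n (A : 'M[int]_n) (g : SD n) (z : int) : SD n :=
  match z with
  | Posz m => iter m (sd_mul A g) (sd_one n)
  | Negz m => iter m.+1 (sd_mul A (sd_inv A g)) (sd_one n)
  end.

Definition is_length_function (R : realType) n (A : 'M[int]_n) (l : SD n -> R) :=
  [/\ forall g, 0 <= l g,
      forall g (z : int), l (sd_pow A g z) = (absz z)%:R * l g,
      forall g h, l (sd_mul A (sd_mul A h g) (sd_inv A h)) = l g &
      forall a b, sd_mul A a b = sd_mul A b a -> l (sd_mul A a b) <= l a + l b].

Definition infinite_order n (A : 'M[int]_n) (g : SD n) :=
  forall m : nat, (0 < m)%N -> sd_pow A g m <> sd_one n.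

Definition purely_positive (R : realType) n (A : 'M[int]_n) (l : SD n -> R) :=
  forall g, infinite_order A g -> 0 < l g.

Definition discrete_length (R : realType) n (l : SD n -> R) :=
  exists2 c : R, 0 < c & forall g, l g != 0 -> c < l g.

Definition is_subgroup n (A : 'M[int]_n) (H : SD n -> Prop) :=
  [/\ H (sd_one n), forall x y, H x -> H y -> H (sd_mul A x y)
    & forall x, H x -> H (sd_inv A x)].

(* virtually abelian: an abelian subgroup of finite index (finitely many left cosets) *)
Definition virtually_abelian n (A : 'M[int]_n) :=
  exists H : SD n -> Prop,
    [/\ is_subgroup A H,
        forall x y, H x -> H y -> sd_mul A x y = sd_mul A y x &
        exists s : seq (SD n), forall g, exists2 t, t \in s & exists2 h, H h & g = sd_mul A t h].

(* Main.v *)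
Require Import Defs.
From HB Require Import structures.
From mathcomp Require Import all_boot all_order all_algebra.
From mathcomp Require Import reals.
Set Implicit Arguments. Unset Strict Implicit. Unset Printing Implicit Defensive.
Import Order.TTheory GRing.Theory Num.Theory.
Local Open Scope ring_scope.

Lemma unit_conv n (A : 'M[int]_n.+1) : A \in unitmx -> A \is a GRing.unit.
Proof. by []. Qed.
Lemma inv_conv n (A : 'M[int]_n.+1) : invmx A = A^-1.
Proof. by []. Qed.
Lemma iterP n (A : 'M[int]_n.+1) k : iter k (mulmx A) 1%:M = A ^+ k.
Proof. elim: k => [|k IH] /=; first by rewrite idmxE. by rewrite IH exprS mulmxE. Qed.

Section L.
Variables (R : realType) (n : nat) (A : 'M[int]_n) (l : SD n -> R).
Hypothesis hl : is_length_function A l.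
Definition LL (v : 'cV[int]_n) := l (v, 0).

Lemma mx0 : mxpowz A 0 = 1%:M. Proof. by []. Qed.

Lemma LL_ge0 v : 0 <= LL v. Proof. by case: hl => H _ _ _; apply: H. Qed.

Lemma LL_add v w : LL (v + w) <= LL v + LL w.
Proof.
case: hl => _ _ _ H.
have E : sd_mul A (v, 0) (w, 0) = (v + w, 0).
  by rewrite /sd_mul /= mul1mx.
rewrite /LL -E; apply: H.
by rewrite E /sd_mul /= mul1mx addrC.
Qed.

Lemma powv v k : sd_pow A (v, 0) (Posz k) = (v *+ k, 0).
Proof.
elim: k => [|k IH] //=. rewrite /= in IH; rewrite IH /sd_mul /= mul1mx mulrS.
by rewrite addr0.
Qed.

Lemma LL_muln v k : LL (v *+ k) = k%:R * LL v.
Proof. case: hl => _ H _ _. by rewrite /LL -powv H. Qed.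

Lemma LL_opp v : LL (- v) = LL v.
Proof.
case: hl => _ H _ _. have := H (v, 0) (Negz 0).
rewrite /= /sd_mul /sd_inv /sd_one /= mul1mx mulmx0 !addr0 mul1r. by [].
Qed.

Lemma LL_sub v w : LL (v - w) <= LL v + LL w.
Proof. by rewrite -(LL_opp w) LL_add. Qed.

Lemma LL_A v : LL (A *m v) = LL v.
Proof.
case: hl => _ _ H _. have := H (v, 0) (0, 1).
rewrite /sd_mul /sd_inv /= !mulmx0 mulmx1 oppr0 mulmx0 !addr0 add0r subrr. by [].
Qed.

Lemma LL_iter v k : LL (iter k (mulmx A) 1%:M *m v) = LL v.
Proof.
elim: k => [|k IH] /=; first by rewrite mul1mx.
by rewrite -mulmxA LL_A.
Qed.
End L.

From Stdlib Require Import Classical.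
From mathcomp Require Import lra.

Lemma key (R : realType) (n : nat) (A : 'M[int]_n.+1) (l : SD n.+1 -> R)
  (hl : is_length_function A l) (hA : A \is a GRing.unit) (c : R) (hc : 0 < c)
  (hd : forall v, LL l v != 0 -> c < LL l v)
  (hp : forall v, v != 0 -> 0 < LL l v) :
  exists N, (0 < N)%N /\ A ^+ N = 1.
Proof.
have LLP : forall k v, LL l (A ^+ k *m v) = LL l v.
  by move=> k v; rewrite -iterP LL_iter.
pose B := \sum_(j < n.+1) LL l (delta_mx j 0).
have Bj : forall j, LL l (delta_mx j 0) <= B.
  move=> j; rewrite /B (bigD1 j) //= lerDl; apply: sumr_ge0 => i _; exact: (LL_ge0 hl).
pose q := (Num.trunc (2 * B / c)).+1.
have hq : 2 * B < q%:R * c.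
  by rewrite -ltr_pdivrMr // truncnS_gt.
pose T := 'M['I_q]_n.+1.
pose f := fun k : 'I_(#|{: T}|.+1) =>
  (\matrix_(i, j) inord (absz ((A ^+ k) i j %% q%:Z)%Z) : T).
have [a [b [ab fab]]] : exists a b, a != b /\ f a = f b.
  apply: NNPP => H.
  have inj : injective f.
    move=> a b e; case: (eqVneq a b) => // ne; exfalso; apply: H; by exists a, b.
  by have := leq_card _ inj; rewrite card_ord ltnn.
have main : forall x y : nat, (x < y)%N ->
   (forall i j, ((A ^+ x) i j %% q%:Z)%Z = ((A ^+ y) i j %% q%:Z)%Z) ->
   A ^+ (y - x) = 1.
  move=> x y xy hmod.
  pose D := A ^+ y - A ^+ x.
  have dvd : forall i j, (q%:Z %| D i j)%Z.
    by move=> i j; rewrite !mxE -eqz_mod_dvd hmod.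
  pose U := \matrix_(i, j) (D i j %/ q%:Z)%Z.
  have hD : forall i j, D i j = U i j *+ q.
    by move=> i j; rewrite [U i j]mxE -mulr_natr natz (divzK (dvd i j)).
  have U0 : U = 0.
    apply/matrixP => i j; rewrite [RHS]mxE.
    case: (eqVneq (U i j) 0) => // nz; exfalso.
    pose u := col j U.
    have unz : u != 0.
      apply: contra nz => /eqP u0.
      by have := congr1 (fun M : 'cV[int]_n.+1 => M i 0) u0; rewrite !mxE => ->.
    have cu : c < LL l u by apply: hd; exact: lt0r_neq0 (hp _ unz).
    have e : u *+ q = A ^+ y *m delta_mx j 0 - A ^+ x *m delta_mx j 0.
      rewrite -!colE; apply/matrixP => i' k; rewrite mulmxnE mxE -hD /D !mxE.
      by [].
    have h : q%:R * LL l u <= 2 * B.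
      rewrite -(LL_muln hl) e; apply: le_trans (LL_sub hl _ _) _.
      rewrite !LLP; have := Bj j; lra.
    have h2 : q%:R * LL l u < q%:R * c := le_lt_trans h hq.
    rewrite ltr_pM2l ?ltr0n // in h2.
    by have := lt_trans cu h2; rewrite ltxx.
  have D0 : D = 0 by apply/matrixP => i j; rewrite hD U0 !mxE mul0rn.
  have Eab : A ^+ y = A ^+ x by move: D0 => /eqP; rewrite subr_eq0 => /eqP.
  have E : A ^+ (y - x) * A ^+ x = A ^+ x.
    by rewrite -exprD subnK ?(ltnW xy).
  apply: (mulIr (unitrX x hA)) => /=; by rewrite E mul1r.
have modE : forall (k : 'I_(#|{: T}|.+1)) i j,
    Posz (val (f k i j)) = ((A ^+ k) i j %% q%:Z)%Z.
  move=> k i j; rewrite mxE /= inordK.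
    by rewrite gez0_abs // modz_ge0.
  have h0 : (0 <= ((A ^+ k) i j %% q%:Z)%Z) by rewrite modz_ge0.
  have h1 : (((A ^+ k) i j %% q%:Z)%Z < q%:Z) by rewrite ltz_pmod.
  by rewrite -(gez0_abs h0) ltz_nat in h1.
case: (ltngtP a b) => h.
- exists (b - a)%N; split; first by rewrite subn_gt0.
  apply: main => // i j; by rewrite -!modE fab.
- exists (a - b)%N; split; first by rewrite subn_gt0.
  apply: main => // i j; by rewrite -!modE fab.
- by move: ab; rewrite (val_inj h) eqxx.
Qed.

Lemma one_mul n (A : 'M[int]_n) g : sd_mul A (sd_one n) g = g.
Proof. by case: g => v k; rewrite /sd_mul /= mul1mx !add0r. Qed.

Theorem lemma11 (R : realType) (n : nat) (A : 'M[int]_n) (hA : A \in unitmx) :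
  (exists l : SD n -> R,
     [/\ is_length_function A l, discrete_length l & purely_positive A l]) ->
  virtually_abelian A.
Proof.
case: n A hA => [|n] A hA [l [hl [c hc hd] hp]].
  exists (fun _ => True); split.
  - by split.
  - move=> [v k] [w m] _ _; rewrite /sd_mul /=; congr pair; last exact: addrC.
    by rewrite [LHS]flatmx0 [RHS]flatmx0.
  - exists [:: sd_one 0] => g; exists (sd_one 0); first by rewrite inE.
    by exists g; rewrite ?one_mul.
have hp' : forall v, v != 0 -> 0 < LL l v.
  move=> v vnz; apply: hp => m m0; rewrite powv //; case=> e.
  move/negP: vnz; apply; apply/eqP/matrixP => i j.
  have := congr1 (fun M : 'cV[int]_n.+1 => M i j) e; rewrite mulmxnE !mxE => /eqP.
  by rewrite mulrn_eq0 -[m == 0%N]negbK -lt0n m0 /= => /eqP.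
have hd' : forall v, LL l v != 0 -> c < LL l v by move=> v; apply: hd.
have [N [N0 AN]] := key hl hA hc hd' hp'.
have expN1 : forall p, (N %| p)%N -> A ^+ p = 1.
  by move=> p /dvdnP [k ->]; rewrite mulnC exprM AN expr1n.
have pw1 : forall k, (N%:Z %| k)%Z -> mxpowz A k = 1%:M.
  case=> p h /=; rewrite iterP idmxE.
    exact: expN1.
  by rewrite mulmxE -exprS inv_conv exprVn expN1 ?invr1.
pose H := fun x : SD n.+1 => (N%:Z %| x.2)%Z.
have Nr : forall k : int, (0 <= (k %% N%:Z)%Z) /\ (absz (k %% N%:Z)%Z < N)%N.
  move=> k; have h0 : (0 <= (k %% N%:Z)%Z) by rewrite modz_ge0 // -lt0n.
  split=> //.
  have h1 : ((k %% N%:Z)%Z < N%:Z) by rewrite ltz_pmod.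
  by rewrite -(gez0_abs h0) ltz_nat in h1.
exists H; split.
- split.
  + exact: dvdz0.
  + by move=> x y hx hy; rewrite /H /=; apply: rpredD.
  + by move=> x hx; rewrite /H /= -mulN1r dvdz_mull.
- move=> [v k] [w m] hx hy; rewrite /sd_mul /= !pw1 // !mul1mx.
  by congr pair; apply: addrC.
- exists [seq (0, Posz r) | r <- iota 0 N] => [[v k]].
  have [h0 h1] := Nr k.
  set r := absz (k %% N%:Z)%Z.
  exists (0, Posz r); first by apply: map_f; rewrite mem_iota add0n.
  exists (A ^+ (N - r) *m v, k - Posz r).
    rewrite /H /= /r gez0_abs //.
    have e : k - (k %% N%:Z)%Z = (k %/ N%:Z)%Z * N%:Z.
      by rewrite {1}(divz_eq k N%:Z) addrK.
    by rewrite e dvdz_mull.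
  rewrite /sd_mul /= iterP mulmxA mulmxE -exprD subnKC ?(ltnW h1) //.
  by rewrite AN -idmxE mul1mx add0r addrC subrK.
Qed.
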